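(* Let $0\le k<n$ be integers and let $\nu$ be a partition which is balanced as a straight shape with height and width both equal to $k$. (1) Let $\lambda:=\delta_n+\nu$. Then $[\varnothing,\lambda]_{\mathrm{shift}}$ is tCDE with $\mathbb{E}(\mathrm{uni}_{[\varnothing,\lambda]_{\mathrm{shift}}};\mathrm{ddeg})=\frac{n+1+k}{4}$. (2) Let $\lambda:=\delta_n+\nu+(n-1-k)^n$. Then $[\varnothing,\lambda]_{\mathrm{shift}}$ is tCDE with $\mathbb{E}(\mathrm{uni}_{[\varnothing,\lambda]_{\mathrm{shift}}};\mathrm{ddeg})=\frac{n}{2}$.
   Context: Partitions are weakly decreasing, eventually zero sequences of nonnegative integers; sums are componentwise: $(\mu+\nu)_i=\mu_i+\nu_i$. $\delta_n=(n,n-1,\ldots,1)$ and $b^a=(b,\ldots,b)$ ($a$ parts). A partition $\nu$ is balanced as a straight shape with height and width $k$ if $\ell(\nu)=\nu_1=k$ (or $\nu=\varnothing$ when $k=0$) and for every $1\le i\le k-1$ with $\nu_i>\nu_{i+1}$ one has $i+\nu_{i+1}=k$ (i.e., every outward corner of its Young diagram lies on the anti-diagonal of the $k\times k$ square). A strict partition has $\lambda_i>\lambda_{i+1}$ whenever $\lambda_i\neq 0$. The shifted Young's lattice is the set of strict partitions ordered by $\mu\subseteq\lambda$ iff $\mu_i\le\lambda_i$ for all $i$; $[\varnothing,\lambda]_{\mathrm{shift}}$ is its interval. It is a distributive lattice: $[\varnothing,\lambda]_{\mathrm{shift}}\cong J(P^{\mathrm{shift}}_\lambda)$, where $P^{\mathrm{shift}}_\lambda$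 is the set of boxes $[i,j]$ with $1\le i\le\ell(\lambda)$, $i\le j\le i+\lambda_i-1$, ordered by $[i,j]\le[i',j']$ iff $i\le i'$ and $j\le j'$, and $J(\cdot)$ denotes the lattice of order ideals. $\mathrm{ddeg}$ is the number of covered elements; $\mathrm{uni}$ is uniform. For $p\in P$ and order ideal $I$: $\mathcal{T}^+_p(I)=1$ iff $p\notin I$ and $p$ is minimal in $P\setminus I$; $\mathcal{T}^-_p(I)=1$ iff $p\in I$ and $p$ is maximal in $I$. A distribution $\mu$ on $J(P)$ is toggle-symmetric if $\mathbb{E}(\mu;\mathcal{T}^+_p)=\mathbb{E}(\mu;\mathcal{T}^-_p)$ for all $p$; $J(P)$ is tCDE if $\mathbb{E}(\mu;\mathrm{ddeg})=\mathbb{E}(\mathrm{uni}_{J(P)};\mathrm{ddeg})$ for every toggle-symmetric $\mu$. *)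

(* Defs.v *)
From HB Require Import structures.
From mathcomp Require Import all_boot all_order all_algebra.
Set Implicit Arguments. Unset Strict Implicit. Unset Printing Implicit Defensive.
Import Order.TTheory GRing.Theory Num.Theory.

(* ---------- Partitions, represented as finite sequences of nats.
   Part lambda_i (1-based) is  nth 0 lambda (i-1); trailing zeros allowed. *)

Definition part (s : seq nat) (i : nat) : nat := nth 0 s i.-1.

Definition is_partition (s : seq nat) : bool := sorted geq s.

Definition padd (s t : seq nat) : seq nat :=
  mkseq (fun i => nth 0 s i + nth 0 t i) (maxn (size s) (size t)).

Definition delta (n : nat) : seq nat := mkseq (fun i => n - i) n.

(* b^a = (b, ..., b) with a parts *)
Definition rect (b a : nat) : seq nat := nseq a b.

Definition plength (s : seq nat) : nat := count (fun x => 0 < x) s.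

Definition balanced (nu : seq nat) (k : nat) : bool :=
  [&& is_partition nu, plength nu == k, part nu 1 == k &
      all (fun i => (part nu i > part nu i.+1) ==> (i + part nu i.+1 == k))
          (iota 1 k.-1)].

Definition shifted_boxes (lam : seq nat) : seq (nat * nat) :=
  [seq (i, j) | i <- iota 1 (size lam), j <- iota i (part lam i)].

Definition shiftP (lam : seq nat) : finType := seq_sub (shifted_boxes lam).

Definition shift_le (lam : seq nat) : rel (shiftP lam) :=
  fun x y => ((ssval x).1 <= (ssval y).1) && ((ssval x).2 <= (ssval y).2).

Section Poset.
Variables (T : finType) (le : rel T).

Definition is_ideal (I : {set T}) : bool :=
  [forall x, forall y, ((y \in I) && le x y) ==> (x \in I)].

Definition ideals : {set {set T}} := [set I | is_ideal I].

Definition togp (p : T) (I : {set T}) : bool :=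
  (p \notin I) && [forall q, ((q \notin I) && le q p) ==> (q == p)].

Definition togm (p : T) (I : {set T}) : bool :=
  (p \in I) && [forall q, ((q \in I) && le p q) ==> (q == p)].

Definition covers_in_J (J I : {set T}) : bool :=
  [&& J \in ideals, I \in ideals, J \proper I &
      [forall K in ideals, ~~ ((J \proper K) && (K \proper I))]].

Definition ddeg (I : {set T}) : nat := #|[set J | covers_in_J J I]|.

Variable R : realFieldType.
Local Open Scope ring_scope.

Definition is_distribution (mu : {set T} -> R) : Prop :=
  (forall I, I \in ideals -> 0 <= mu I) /\ \sum_(I in ideals) mu I = 1.

Definition expect (mu : {set T} -> R) (f : {set T} -> R) : R :=
  \sum_(I in ideals) mu I * f I.

Definition uni : {set T} -> R := fun _ => (#|ideals|%:R)^-1.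

Definition toggle_symmetric (mu : {set T} -> R) : Prop :=
  forall p : T, expect mu (fun I => (togp p I)%:R) = expect mu (fun I => (togm p I)%:R).

Definition tCDE : Prop :=
  forall mu, is_distribution mu -> toggle_symmetric mu ->
    expect mu (fun I => (ddeg I)%:R) = expect uni (fun I => (ddeg I)%:R).

End Poset.

(* Main.v *)
Require Import Defs.
From HB Require Import structures.
From mathcomp Require Import all_boot all_order all_algebra.
From mathcomp Require Import zify ring lra.
Import Order.TTheory GRing.Theory Num.Theory.

Module MG.
Set Implicit Arguments. Unset Strict Implicit. Unset Printing Implicit Defensive.

Section Gen.
Variables (T : finType) (le : rel T).

Lemma idealP (I : {set T}) :
  reflect (forall x y, y \in I -> le x y -> x \in I) (is_ideal le I).
Proof.
apply: (iffP forallP) => [H x y yI lxy | H x].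
  by move: (H x) => /forallP /(_ y) /implyP; apply; rewrite yI.
by apply/forallP => y; apply/implyP => /andP [yI lxy]; exact: H yI lxy.
Qed.

Lemma togmP p (I : {set T}) :
  reflect (p \in I /\ forall q, q \in I -> le p q -> q = p) (togm le p I).
Proof.
apply: (iffP andP) => [[pI /forallP H] | [pI H]]; split => //.
  by move=> q qI lpq; move: (H q); rewrite qI lpq => /eqP.
by apply/forallP => q; apply/implyP => /andP [qI lpq]; rewrite (H q qI lpq).
Qed.

Lemma togpP p (I : {set T}) :
  reflect (p \notin I /\ forall q, q \notin I -> le q p -> q = p) (togp le p I).
Proof.
apply: (iffP andP) => [[pI /forallP H] | [pI H]]; split => //.
  by move=> q qI lpq; move: (H q); rewrite qI lpq => /eqP.
by apply/forallP => q; apply/implyP => /andP [qI lpq]; rewrite (H q qI lpq).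
Qed.

Lemma ideal_setD1 I p : is_ideal le I -> togm le p I -> is_ideal le (I :\ p).
Proof.
move=> /idealP iI /togmP [pI mp]; apply/idealP => x y.
rewrite !in_setD1 => /andP [yp yI] lxy; rewrite (iI x y yI lxy) andbT.
by apply/eqP => exp; move: yp; rewrite (mp y yI) ?eqxx // -exp.
Qed.

Lemma ideal_setU1 I p : is_ideal le I -> togp le p I -> is_ideal le (p |: I).
Proof.
move=> /idealP iI /togpP [pI mp]; apply/idealP => x y.
rewrite !in_setU1 => /orP [/eqP -> lxp | yI lxy]; last by rewrite (iI x y yI lxy) orbT.
by case xI: (x \in I); rewrite ?orbT // (mp x) ?xI ?eqxx.
Qed.

Lemma togm_setU1 I p : is_ideal le I -> togp le p I -> togm le p (p |: I).
Proof.
move=> /idealP iI /togpP [pI mp]; apply/togmP; split; first by rewrite setU11.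
move=> q; rewrite in_setU1 => /orP [/eqP -> // | qI lpq].
by move: pI; rewrite (iI p q qI lpq).
Qed.

Lemma togp_setD1 I p : is_ideal le I -> togm le p I -> togp le p (I :\ p).
Proof.
move=> /idealP iI /togmP [pI mp]; apply/togpP; split; first by rewrite setD11.
move=> q; rewrite in_setD1 negb_and negbK => /orP [/eqP -> // | qI lqp].
by move: qI; rewrite (iI q p pI lqp).
Qed.

Lemma card_togp_togm p :
  #|[set I in ideals le | togp le p I]| = #|[set I in ideals le | togm le p I]|.
Proof.
apply/eqP; rewrite eqn_leq; apply/andP; split.
- rewrite -(@card_in_imset _ _ (fun I => p |: I)).
    apply: subset_leq_card; apply/subsetP => J /imsetP [I].
    rewrite !inE => /andP [iI tI] ->; rewrite ideal_setU1 ?togm_setU1 //.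
  move=> I J; rewrite !inE => /andP [_ /togpP [pI _]] /andP [_ /togpP [pJ _]] E.
  by rewrite -(setU1K pI) E setU1K.
- rewrite -(@card_in_imset _ _ (fun I => I :\ p)).
    apply: subset_leq_card; apply/subsetP => J /imsetP [I].
    rewrite !inE => /andP [iI tI] ->; rewrite ideal_setD1 ?togp_setD1 //.
  move=> I J; rewrite !inE => /andP [_ /togmP [pI _]] /andP [_ /togmP [pJ _]] E.
  by rewrite -(setD1K pI) E setD1K.
Qed.

End Gen.

End MG.
Import MG.

Module MG3.
Set Implicit Arguments. Unset Strict Implicit. Unset Printing Implicit Defensive.

Section G3.
Variables (T : finType) (le : rel T) (r : T -> nat).
Hypothesis hr : forall x y, le x y -> x != y -> r x < r y.

Lemma covers_togm J I : I \in ideals le ->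
  covers_in_J le J I -> exists2 p, togm le p I & J = I :\ p.
Proof.
move=> Iid /and4P [Jid _ JI /forallP nK].
have [p0 p0I] : exists p0, p0 \in I :\: J.
  by move/properP: JI => [_ [x xI xJ]]; exists x; rewrite inE xI xJ.
case: (arg_minnP r p0I) => p pIJ pmin.
have [pI pJ] : p \in I /\ p \notin J.
  have h : p \in I :\: J := pIJ. by move: h; rewrite !inE => /andP [] -> ->.
have Kid : p |: J \in ideals le.
  rewrite inE; apply/idealP => x y; rewrite in_setU1 => /orP [/eqP -> lxp | yJ lxy].
    move: Iid Jid; rewrite !inE => /idealP iI /idealP iJ.
    have xI := iI x p pI lxp.
    case xJ: (x \in J); first by rewrite orbT.
    case: (eqVneq x p) => [//|xp].
    have xIJ : x \in I :\: J by rewrite inE xJ xI.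
    have := pmin x xIJ.
    by rewrite leqNgt (hr lxp xp).
  by move: Jid; rewrite inE => /idealP iJ; rewrite in_setU1 (iJ x y yJ lxy) orbT.
have KI : p |: J = I.
  apply/eqP; move: (nK (p |: J)); rewrite Kid /= => nb.
  have JK : J \proper p |: J.
    by apply/properP; split; [exact: subsetUr | exists p; rewrite ?setU11].
  move: nb; rewrite JK /= => nKI.
  have sKI : p |: J \subset I.
    by apply/subsetP => x; rewrite in_setU1 => /orP [/eqP -> // | xJ];
       move/proper_sub/subsetP: JI; apply.
  by rewrite eqEproper sKI nKI.
exists p; last by rewrite -KI setU1K.
apply/togmP; split => // q qI lpq.
apply/eqP; apply: contraT => qp.
move: qI; rewrite -KI in_setU1 (negbTE qp) /= => qJ.
by move: Jid pJ; rewrite inE => /idealP iJ; rewrite (iJ p q qJ lpq).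
Qed.

Lemma togm_covers I p : I \in ideals le -> togm le p I -> covers_in_J le (I :\ p) I.
Proof.
move=> Iid tp; have /togmP [pI _] := tp.
apply/and4P; split => //.
- by rewrite inE; apply: ideal_setD1 => //; move: Iid; rewrite inE.
- exact: properD1.
- apply/forallP => K; apply/implyP => _; apply/negP => /andP [h1 h2].
  have c1 := proper_card h1; have c2 := proper_card h2.
  move: (cardsD1 p I); rewrite pI => cI.
  by move: c1 c2; rewrite cI add1n ltnS => c1 /(leq_trans c1); rewrite ltnn.
Qed.

Lemma ddeg_togm I : I \in ideals le -> ddeg le I = #|[set p | togm le p I]|.
Proof.
move=> Iid; rewrite /ddeg.
have -> : [set J | covers_in_J le J I] = (fun p => I :\ p) @: [set p | togm le p I].
  apply/setP => J; rewrite inE; apply/idP/imsetP.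
    by move/(covers_togm Iid) => [p tp ->]; exists p; rewrite ?inE.
  by move=> [p]; rewrite inE => tp ->; exact: togm_covers.
rewrite card_in_imset // => p q; rewrite !inE => /togmP [pI _] /togmP [qI _] E.
apply/eqP; apply: contraT => pq.
by move: (setD11 q I); rewrite -E in_setD1 eq_sym pq qI.
Qed.

End G3.

End MG3.
Import MG3.

Module MG2.
Set Implicit Arguments. Unset Strict Implicit. Unset Printing Implicit Defensive.
Local Open Scope ring_scope.

Section G2.
Variables (T : finType) (le : rel T) (R : realFieldType).

Lemma set0_ideal : (set0 : {set T}) \in ideals le.
Proof. by rewrite inE; apply/idealP => x y; rewrite inE. Qed.

Lemma sum_indic (A : {set {set T}}) (b : {set T} -> bool) :
  \sum_(I in A) ((b I)%:R : R) = (#|[set I in A | b I]|)%:R.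
Proof.
rewrite -sum1_card natr_sum big_mkcond [RHS]big_mkcond /=.
by apply: eq_bigr => I _; rewrite inE; case: (I \in A); case: (b I).
Qed.

Lemma uni_distribution : is_distribution le (uni le R).
Proof.
have hpos : (0 < #|ideals le|)%N by apply/card_gt0P; exists set0; exact: set0_ideal.
split; first by move=> I _; rewrite /uni invr_ge0 ler0n.
rewrite /uni sumr_const; set x := (#|ideals le|%:R : R); rewrite -mulr_natr mulVf //.
by rewrite /x pnatr_eq0 -lt0n.
Qed.

Lemma uni_toggle_symmetric : toggle_symmetric le (uni le R).
Proof.
move=> p; rewrite /expect -!mulr_sumr !sum_indic.
by rewrite card_togp_togm.
Qed.

Lemma tCDE_of_identity (w : T -> R) (c : R) :
  (forall I, I \in ideals le -> ((ddeg le I)%:R : R)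
     = c + \sum_p w p * ((togp le p I)%:R - (togm le p I)%:R)) ->
  tCDE le R /\ expect le (uni le R) (fun I => (ddeg le I)%:R) = c.
Proof.
move=> H.
have key : forall mu, is_distribution le mu -> toggle_symmetric le mu ->
   expect le mu (fun I => (ddeg le I)%:R) = c.
  move=> mu [_ s1] ts; rewrite /expect.
  rewrite (eq_bigr (fun I => mu I * c + \sum_p w p * (mu I * (togp le p I)%:R - mu I * (togm le p I)%:R))); last first.
    move=> I Iid; rewrite H // mulrDr mulr_sumr; congr (_ + _); apply: eq_bigr => p _.
    by rewrite mulrA [mu I * w p]mulrC -mulrA mulrBr.
  rewrite big_split /= -mulr_suml s1 mul1r exchange_big /=.
  rewrite big1 ?addr0 // => p _; rewrite -mulr_sumr sumrB.
  by have := ts p; rewrite /expect => ->; rewrite subrr mulr0.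
split; last exact: key (uni_distribution) (uni_toggle_symmetric).
move=> mu dmu tmu; rewrite (key mu dmu tmu).
by rewrite (key _ uni_distribution uni_toggle_symmetric).
Qed.

End G2.

End MG2.
Import MG2.

Module MS1.
Set Implicit Arguments. Unset Strict Implicit. Unset Printing Implicit Defensive.

Section Shape.
Variable lam : seq nat.
Local Notation L := (size lam).
Local Notation lp := (part lam).

Definition box (b : nat * nat) : bool := [&& (0 < b.1)%N, (b.1 <= b.2)%N & (b.2 < b.1 + lp b.1)%N].

Lemma lp_gt0_size i : (0 < lp i)%N -> (i.-1 < L)%N.
Proof. by rewrite /part; case: (ltnP i.-1 L) => // h; rewrite nth_default. Qed.

Lemma mem_boxes b : (b \in shifted_boxes lam) = box b.
Proof.
apply/allpairsPdep/idP => [[i [j [hi hj ->]]] | ].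
  move: hi hj; rewrite !mem_iota /box /=; lia.
case: b => i j; rewrite /box /= => h.
have hs : (i.-1 < L)%N by apply: lp_gt0_size; lia.
exists i, j; rewrite !mem_iota; split => //; lia.
Qed.

Lemma uniq_boxes : uniq (shifted_boxes lam).
Proof.
apply: allpairs_uniq_dep; first exact: iota_uniq.
  by move=> i _; exact: iota_uniq.
by move=> [a b] [c d] _ _ /= [-> ->].
Qed.

Lemma sum_shiftP (R : nmodType) (F : nat * nat -> R) :
  (\sum_(q : shiftP lam) F (ssval q) =
   \sum_(i <- iota 1 L) \sum_(j <- iota i (lp i)) F (i, j))%R.
Proof.
transitivity (\sum_(b <- shifted_boxes lam) F b)%R; last first.
  by rewrite /shifted_boxes big_allpairs_dep.
rewrite -[in RHS](val_seq_sub_enum uniq_boxes) big_map.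
by rewrite /index_enum !unlock.
Qed.

End Shape.

End MS1.
Import MS1.

Module MS2.
Set Implicit Arguments. Unset Strict Implicit. Unset Printing Implicit Defensive.

Lemma prefix_count (P : pred nat) a l :
  (forall j, P j -> (a <= j < a + l)%N) ->
  (forall j j', (a <= j' <= j)%N -> P j -> P j') ->
  forall j, P j = (a <= j < a + count P (iota a l))%N.
Proof.
elim: l => [|l IH] hb hc j.
  by apply/idP/idP => [/hb|]; rewrite /= !addn0; lia.
have -> : iota a l.+1 = iota a l ++ [:: a + l] by rewrite -addn1 iotaD.
rewrite count_cat /= addn0.
case: (boolP (P (a + l))) => hl.
  have -> : count P (iota a l) = l.
    rewrite -[RHS](size_iota a l) -count_predT; apply: eq_in_count => x.
    rewrite mem_iota => hx /=; apply: (hc (a + l)) => //; lia.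
  apply/idP/idP => [/hb|hj]; first lia.
  by apply: (hc (a + l)) => //; lia.
rewrite addn0; apply: IH => // j' hj'.
have := hb _ hj'; case: (eqVneq j' (a + l)) => [e|ne]; first by move: hj'; rewrite e (negbTE hl).
lia.
Qed.

Section Shape2.
Variable lam : seq nat.
Local Notation L := (size lam).
Local Notation lp := (part lam).
Hypothesis hE : forall i, (0 < i)%N -> (0 < lp i.+1)%N -> (lp i.+1 < lp i)%N.

Lemma Emono i i' : (0 < i)%N -> (i <= i')%N -> (0 < lp i')%N -> (i' + lp i' <= i + lp i)%N.
Proof.
move=> i0 /subnK <-; elim: (i' - i) => [|d IH] h; first by rewrite add0n.
rewrite addSn in h *.
have h2 : (lp (d + i).+1 < lp (d + i))%N by apply: hE => //; lia.
have := IH (leq_ltn_trans (leq0n _) h2); lia.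
Qed.

Variable I : {set shiftP lam}.
Hypothesis Iid : is_ideal (@shift_le lam) I.

Definition inI (b : nat * nat) : bool := [exists q in I, ssval q == b].

Lemma inI_box b : inI b -> box lam b.
Proof. by case/existsP => q /andP [_ /eqP <-]; rewrite -mem_boxes ssvalP. Qed.

Lemma inI_val q : inI (ssval q) = (q \in I).
Proof.
apply/existsP/idP => [[q' /andP [q'I /eqP e]] | qI]; last by exists q; rewrite qI eqxx.
by have -> : q = q' by apply: val_inj; rewrite /= e.
Qed.

Lemma inI_down b b' : inI b -> box lam b' -> (b'.1 <= b.1)%N -> (b'.2 <= b.2)%N -> inI b'.
Proof.
case/existsP => q /andP [qI /eqP qb] hb' h1 h2.
have hb : b' \in shifted_boxes lam by rewrite mem_boxes.
apply/existsP; exists (SeqSub hb); rewrite eqxx andbT.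
by move/idealP: Iid => iI; apply: (iI _ q qI); rewrite /shift_le /= qb h1 h2.
Qed.

Lemma togm_char q : togm (@shift_le lam) q I =
  [&& inI (ssval q), ~~ inI ((ssval q).1, (ssval q).2.+1) & ~~ inI ((ssval q).1.+1, (ssval q).2)].
Proof.
case hq: (ssval q) => [i j] /=.
have bq : box lam (i, j) by rewrite -hq -mem_boxes ssvalP.
apply/togmP/idP => [[qI mx] | /and3P [h1 h2 h3]].
  rewrite -hq inI_val qI /=; apply/andP; split.
    apply/negP => /existsP [q' /andP [q'I /eqP e]].
    have := mx q' q'I; rewrite /shift_le e hq /= leqnn leqnSn => /(_ isT) eq.
    by move: e; rewrite eq hq => -[]; lia.
  apply/negP => /existsP [q' /andP [q'I /eqP e]].
  have := mx q' q'I; rewrite /shift_le e hq /= leqnn leqnSn => /(_ isT) eq.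
  by move: e; rewrite eq hq => -[]; lia.
split; first by rewrite -inI_val hq.
move=> q' q'I; rewrite /shift_le hq /=.
case hq': (ssval q') => [i' j'] /= /andP [l1 l2].
have bq' : box lam (i', j') by rewrite -hq' -mem_boxes ssvalP.
have iq' : inI (i', j') by rewrite -hq' inI_val.
apply: val_inj; rewrite /= hq hq'.
move: bq bq'; rewrite /box /= => bq bq'.
case: (ltnP j j') => jj.
  have := Emono (_ : 0 < i)%N l1 (_ : 0 < lp i')%N.
  move=> /(_ ltac:(lia) ltac:(lia)) em.
  have : inI (i, j.+1) by apply: (inI_down iq'); rewrite /box /=; lia.
  by rewrite (negbTE h2).
case: (ltnP i i') => ii.
  have := Emono (_ : 0 < i.+1)%N ii (_ : 0 < lp i')%N.
  move=> /(_ ltac:(lia) ltac:(lia)) em.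
  have : inI (i.+1, j) by apply: (inI_down iq'); rewrite /box /=; lia.
  by rewrite (negbTE h3).
by congr pair; lia.
Qed.

Lemma togp_char q : togp (@shift_le lam) q I =
  [&& ~~ inI (ssval q), ((ssval q).2 == (ssval q).1) || inI ((ssval q).1, (ssval q).2.-1)
    & ((ssval q).1 == 1%N) || inI ((ssval q).1.-1, (ssval q).2)].
Proof.
case hq: (ssval q) => [i j] /=.
have bq : box lam (i, j) by rewrite -hq -mem_boxes ssvalP.
move: (bq); rewrite /box /= => bq'.
apply/togpP/idP => [[qI mn] | /and3P [h1 h2 h3]].
  rewrite -hq inI_val qI /=; apply/andP; split.
    case: (eqVneq j i) => //= ji.
    have hb : (i, j.-1) \in shifted_boxes lam by rewrite mem_boxes /box /=; lia.
    case: (boolP (SeqSub hb \in I)) => [h|h]; first by move: (inI_val (SeqSub hb)); rewrite h /=.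
    have := mn _ h; rewrite /shift_le /= hq /= => /(_ ltac:(lia)) /(congr1 val).
    by rewrite /= hq => -[]; lia.
  case: (eqVneq i 1%N) => //= i1.
  have em := Emono (_ : 0 < i.-1)%N (leq_pred i) (_ : 0 < lp i)%N.
  move: em => /(_ ltac:(lia) ltac:(lia)) em.
  have hb : (i.-1, j) \in shifted_boxes lam by rewrite mem_boxes /box /=; lia.
  case: (boolP (SeqSub hb \in I)) => [h|h]; first by move: (inI_val (SeqSub hb)); rewrite h /=.
  have := mn _ h; rewrite /shift_le /= hq /= => /(_ ltac:(lia)) /(congr1 val).
  by rewrite /= hq => -[]; lia.
split; first by rewrite -inI_val hq.
move=> q' q'I; rewrite /shift_le hq /=.
case hq': (ssval q') => [i' j'] /= /andP [l1 l2].
have bq2 : box lam (i', j') by rewrite -hq' -mem_boxes ssvalP.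
have niq' : ~~ inI (i', j') by rewrite -hq' inI_val.
apply: val_inj; rewrite /= hq hq'.
move: bq2; rewrite /box /= => bq2.
case: (ltnP i' i) => ii.
  move: h3; rewrite (_ : (i == 1%N) = false) /=; last by lia.
  move=> h3; have : inI (i', j') by apply: (inI_down h3) => //=; lia.
  by rewrite (negbTE niq').
case: (ltnP j' j) => jj.
  move: h2; rewrite (_ : (j == i) = false) /=; last by lia.
  move=> h2; have : inI (i', j') by apply: (inI_down h2) => //=; lia.
  by rewrite (negbTE niq').
by congr pair; lia.
Qed.

Definition m i := count (fun j => inI (i, j)) (iota i (lp i)).

Lemma inI_m i j : inI (i, j) = (0 < i)%N && (i <= j < i + m i)%N.
Proof.
case: (posnP i) => [->|i0].
  by apply/negbTE/negP => /inI_box; rewrite /box.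
rewrite /=; apply: (prefix_count (P := fun j => inI (i, j))).
  by move=> j' /inI_box; rewrite /box /=; lia.
move=> j1 j' hj h; have := inI_box h; rewrite /box /= => hb.
by apply: (inI_down h); rewrite /box /=; lia.
Qed.

Lemma m_le i : (m i <= lp i)%N.
Proof. by rewrite /m -[X in (_ <= X)%N](size_iota i) count_size. Qed.

Lemma m_dec i : (0 < i)%N -> (0 < m i.+1)%N -> (m i.+1 < m i)%N.
Proof.
move=> i0 m0.
have h1 : inI (i.+1, i + m i.+1) by rewrite inI_m; lia.
have hl := hE i0 (leq_ltn_trans (leq0n _) (leq_trans m0 (m_le i.+1))).
have := inI_box h1; rewrite /box /= => b1.
have : inI (i, i + m i.+1) by apply: (inI_down h1) => //; rewrite /box /=; lia.
rewrite inI_m; lia.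
Qed.

End Shape2.

End MS2.
Import MS2.

Module MS3.
Set Implicit Arguments. Unset Strict Implicit. Unset Printing Implicit Defensive.
Local Open Scope ring_scope.

Lemma sum_iota_single a l c (P : pred nat) (f : nat -> int) :
  (forall j, P j -> j = c) ->
  \sum_(j <- iota a l) f j * (P j)%:R = if P c && (a <= c < a + l)%N then f c else 0.
Proof.
move=> hP; elim: l a => [|l IH] a; first by rewrite big_nil addn0; case: (P c); rewrite //=; case: leqP => //; lia.
rewrite /= big_cons IH.
case: (boolP (P a)) => Pa.
  have ac := hP a Pa; rewrite -ac Pa mulr1 /=.
  by rewrite ltnn /= addr0 leqnn; case: ltnP => //; lia.
rewrite mulr0 add0r.
case: (boolP (P c)) => Pc //=.
have ca : c != a by apply: contraNneq Pa => <-.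
have -> : (a.+1 <= c < a.+1 + l)%N = (a <= c < a + l.+1)%N by lia.
by [].
Qed.

Section Shape3.
Variable lam : seq nat.
Local Notation L := (size lam).
Local Notation lp := (part lam).
Local Notation N := (part lam 1).
Hypothesis hE : forall i, (0 < i)%N -> (0 < lp i.+1)%N -> (lp i.+1 < lp i)%N.
Hypothesis hB : forall i, (0 < i)%N -> (0 < lp i.+1)%N -> (lp i.+1 + 2 <= lp i)%N ->
  (2 * i + lp i.+1 = N)%N.
Hypothesis hD : forall i, (0 < i)%N -> lp i.+1 = 0%N -> (2 <= lp i)%N -> (2 * i.+1 = N + 3)%N.
Hypothesis hN : (0 < N)%N.

Definition W (b : nat * nat) : int :=
  if b.1 == b.2 then (2 * b.1)%:Z - N%:Z - 3 else (2 * (b.1 + b.2))%:Z - (2 * N)%:Z - 4.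

Variable I : {set shiftP lam}.
Hypothesis Iid : is_ideal (@shift_le lam) I.

Local Notation inI := (inI I).
Local Notation m := (m I).

Definition Tm i : int := if (0 < m i)%N && ~~ inI (i.+1, (i + m i).-1) then 4 + W (i, (i + m i).-1) else 0.
Definition Tp i : int := if (m i < lp i)%N && ((i == 1%N) || inI (i.-1, i + m i)) then - W (i, i + m i) else 0.
Definition Psi i : int := if m i == 0%N then (N + 1)%:Z else (2 * (m i + i))%:Z.

Lemma row_tele i : (0 < i)%N -> Tm i + Tp i.+1 = Psi i - Psi i.+1.
Proof.
move=> i0.
have l1 := m_le I i; have l2 := m_le I i.+1.
have d := @m_dec _ hE I Iid i i0.
have e := hE i0; have b := hB i0; have dd := hD i0.
rewrite /Tm /Tp /Psi /W /= !(inI_m Iid) /=.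
repeat case: ifP; lia.
Qed.

Definition Gb (b : nat * nat) : int :=
  (4 + W b) * ([&& inI b, ~~ inI (b.1, b.2.+1) & ~~ inI (b.1.+1, b.2)])%:R
  - W b * ([&& ~~ inI b, (b.2 == b.1) || inI (b.1, b.2.-1)
               & (b.1 == 1%N) || inI (b.1.-1, b.2)])%:R.

Lemma row_sum i : (0 < i)%N -> \sum_(j <- iota i (lp i)) Gb (i, j) = Tm i + Tp i.
Proof.
move=> i0; have l1 := m_le I i.
rewrite /Gb /= sumrB.
rewrite (@sum_iota_single i (lp i) ((i + m i).-1)
   (fun j => [&& inI (i, j), ~~ inI (i, j.+1) & ~~ inI (i.+1, j)]) (fun j => 4 + W (i, j))); last first.
  by move=> j /=; rewrite !(inI_m Iid); lia.
rewrite (@sum_iota_single i (lp i) (i + m i)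
   (fun j => [&& ~~ inI (i, j), (j == i) || inI (i, j.-1) & (i == 1%N) || inI (i.-1, j)])
   (fun j => W (i, j))); last first.
  by move=> j /=; rewrite !(inI_m Iid); lia.
rewrite /Tm /Tp.
have -> : [&& inI (i, (i + m i).-1), ~~ inI (i, (i + m i).-1.+1) & ~~ inI (i.+1, (i + m i).-1)]
     && (i <= (i + m i).-1 < i + lp i)%N = (0 < m i)%N && ~~ inI (i.+1, (i + m i).-1).
  by rewrite !(inI_m Iid); lia.
have -> : [&& ~~ inI (i, i + m i), (i + m i == i) || inI (i, (i + m i).-1)
        & (i == 1%N) || inI (i.-1, i + m i)] && (i <= i + m i < i + lp i)%N
     = (m i < lp i)%N && ((i == 1%N) || inI (i.-1, i + m i)).
  by rewrite !(inI_m Iid); lia.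
by case: ifP; case: ifP; rewrite ?subr0 ?sub0r.
Qed.

Lemma identity_int :
  \sum_(q : shiftP lam) ((4 + W (ssval q)) * (togm (@shift_le lam) q I)%:R
                        - W (ssval q) * (togp (@shift_le lam) q I)%:R) = (N + 1)%:Z.
Proof.
transitivity (\sum_(q : shiftP lam) Gb (ssval q)).
  by apply: eq_bigr => q _; rewrite (togm_char hE Iid) (togp_char hE Iid).
rewrite sum_shiftP.
rewrite (eq_big_seq (fun i => Tm i + Tp i)); last first.
  by move=> i; rewrite mem_iota => hi; apply: row_sum; lia.
have -> : iota 1 L = index_iota 1 L.+1 by rewrite /index_iota subn1.
rewrite big_split /=.
have hTp : \sum_(1 <= i < L.+1) Tp i + Tp L.+1 = Tp 1 + \sum_(1 <= i < L.+1) Tp i.+1.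
  by rewrite -big_nat_recr // -big_nat_recl.
have TpL : Tp L.+1 = 0.
  rewrite /Tp; have := m_le I L.+1; rewrite /part /= nth_default //; by rewrite leqn0 => /eqP ->.
have PsiL : Psi L.+1 = (N + 1)%:Z.
  rewrite /Psi; have := m_le I L.+1; rewrite /part /= nth_default //; by rewrite leqn0 => /eqP ->.
rewrite TpL addr0 in hTp; rewrite hTp addrCA -big_split /=.
rewrite (eq_big_nat _ _ (F2 := fun i => - (Psi i.+1 - Psi i))); last first.
  by move=> i hi; rewrite row_tele ?opprB //; lia.
rewrite sumrN telescope_sumr // PsiL opprB.
have l1 := m_le I 1.
rewrite /Tp /Psi /W /=.
repeat case: ifP; lia.
Qed.

End Shape3.

End MS3.
Import MS3.

Module MS4.
Set Implicit Arguments. Unset Strict Implicit. Unset Printing Implicit Defensive.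
Local Open Scope ring_scope.

Lemma card_set_sum (T : finType) (b : pred T) : #|[set p | b p]| = (\sum_p (b p : nat))%N.
Proof.
rewrite -sum1_card big_mkcond /=; apply: eq_bigr => p _.
by rewrite inE; case: (b p).
Qed.

Section Final.
Variable lam : seq nat.
Local Notation lp := (part lam).
Local Notation N := (part lam 1).
Hypothesis hE : forall i, (0 < i)%N -> (0 < lp i.+1)%N -> (lp i.+1 < lp i)%N.
Hypothesis hB : forall i, (0 < i)%N -> (0 < lp i.+1)%N -> (lp i.+1 + 2 <= lp i)%N ->
  (2 * i + lp i.+1 = N)%N.
Hypothesis hD : forall i, (0 < i)%N -> lp i.+1 = 0%N -> (2 <= lp i)%N -> (2 * i.+1 = N + 3)%N.
Hypothesis hN : (0 < N)%N.

Theorem shape_tCDE (R : realFieldType) :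
  tCDE (@shift_le lam) R /\
  expect (@shift_le lam) (uni (@shift_le lam) R) (fun I => (ddeg (@shift_le lam) I)%:R)
   = (N + 1)%:R / 4%:R.
Proof.
apply: (tCDE_of_identity (w := fun q => (W lam (ssval q))%:~R / 4%:R)).
move=> I; rewrite inE => Iid.
have hr : forall x y : shiftP lam, shift_le x y -> x != y ->
    ((fun q : shiftP lam => (ssval q).1 + (ssval q).2) x < (fun q : shiftP lam => (ssval q).1 + (ssval q).2) y)%N.
  move=> x y; rewrite /shift_le => /andP [l1 l2] xy /=.
  have : ssval x != ssval y by rewrite (inj_eq val_inj).
  move: l1 l2; case: (ssval x) => a b; case: (ssval y) => c d /= l1 l2.
  rewrite xpair_eqE negb_and; lia.
rewrite (ddeg_togm hr) ?inE // card_set_sum.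
have := congr1 (fun z : int => (z%:~R : R)) (identity_int hE hB hD hN Iid).
rewrite /= rmorph_sum /= pmulrn => H.
rewrite natr_sum.
pose wq (q : shiftP lam) : R := (W lam (ssval q))%:~R.
pose tm (q : shiftP lam) : R := (togm (@shift_le lam) q I : nat)%:R.
pose tp (q : shiftP lam) : R := (togp (@shift_le lam) q I : nat)%:R.
rewrite (eq_bigr (fun q => 4%:R * tm q + wq q * tm q - wq q * tp q)) in H; last first.
  by move=> q _; rewrite intrB !intrM intrD !rmorph_nat mulrDl.
rewrite sumrB big_split /= -mulr_sumr in H.
rewrite [in RHS](eq_bigr (fun q => (wq q * tp q - wq q * tm q) / 4%:R)); last first.
  by move=> q _; rewrite /wq /tp /tm; ring.
rewrite -mulr_suml sumrB.
move: H; rewrite -/(tm _).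
set A := \sum_q tm q; set B := \sum_q wq q * tm q; set C := \sum_q wq q * tp q.
move=> H; have H' : 4%:R * A + B - C = (N + 1)%:R := H.
rewrite -H'.
have e4 : (4%:R : R) != 0 by rewrite pnatr_eq0.
apply: (mulfI e4); rewrite mulrDr !mulrA !(mulrC 4%:R) -!mulrA !divff // !mulr1.
rewrite (mulrC A); lra.
Qed.

End Final.

End MS4.
Import MS4.

Module MS5.
Set Implicit Arguments. Unset Strict Implicit. Unset Printing Implicit Defensive.

Lemma nth_padd s t i : nth 0 (padd s t) i = nth 0 s i + nth 0 t i.
Proof.
rewrite /padd; case: (ltnP i (maxn (size s) (size t))) => h.
  by rewrite nth_mkseq.
rewrite nth_default ?size_mkseq // !nth_default //; lia.
Qed.

Lemma nth_delta n i : nth 0 (delta n) i = n - i.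
Proof.
rewrite /delta; case: (ltnP i n) => h; first by rewrite nth_mkseq.
by rewrite nth_default ?size_mkseq //; lia.
Qed.

Lemma nth_rect b a i : nth 0 (rect b a) i = if i < a then b else 0.
Proof. by rewrite /rect nth_nseq. Qed.

Section Nu.
Variables (nu : seq nat) (k : nat).
Hypothesis hb : balanced nu k.
Local Notation v j := (nth 0 nu j).

Lemma F1 j : v j.+1 <= v j.
Proof.
move: hb => /and4P [/sortedP hs _ _ _].
case: (ltnP j.+1 (size nu)) => h; first exact: (hs 0 j h).
by rewrite nth_default.
Qed.

Lemma F1m j j' : j <= j' -> v j' <= v j.
Proof.
move/subnK <-; elim: (j' - j) => [|d IH] //.
by rewrite addSn; apply: leq_trans (F1 _) IH.
Qed.

Lemma F4 : v 0 = k.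
Proof. by move: hb => /and4P [_ _ /eqP <- _]. Qed.

Lemma F2 j : k <= j -> v j = 0.
Proof.
move=> kj; apply/eqP; rewrite -leqn0.
apply: leq_trans (F1m kj) _; rewrite leqn0; apply/negPn/negP => hk.
move: hb => /and4P [_ /eqP hc _ _].
have sz : k < size nu by case: (ltnP k (size nu)) => // h; move: hk; rewrite nth_default.
have : k.+1 <= plength nu.
  rewrite /plength -(cat_take_drop k.+1 nu) count_cat.
  apply: leq_trans (leq_addr _ _).
  have -> : count (fun x => 0 < x) (take k.+1 nu) = size (take k.+1 nu).
    apply/eqP; rewrite -all_count; apply/(all_nthP 0) => t ht.
    rewrite nth_take; last by move: ht; rewrite size_take; case: ifP; lia.
    apply: leq_trans (F1m (_ : t <= k)); first by rewrite lt0n.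
    by move: ht; rewrite size_take; case: ifP; lia.
  by rewrite size_take; case: ifP; lia.
by rewrite hc ltnn.
Qed.

Lemma F3 j : v j.+1 < v j -> j.+1 + v j.+1 = k.
Proof.
move=> h.
case: (ltnP j.+1 k) => hj.
  move: hb => /and4P [_ _ _ /allP /(_ j.+1)].
  rewrite mem_iota /part /=; move=> /(_ ltac:(lia)) /implyP /(_ h) /eqP.
  by [].
case: (ltnP k j.+1) => hk.
  by move: h; rewrite (F2 (_ : k <= j)) //; lia.
have e : j.+1 = k by lia.
by rewrite (F2 (_ : k <= j.+1)) ?e ?addn0 //; lia.
Qed.

End Nu.

End MS5.
Import MS5.

Unset Implicit Arguments.
Local Open Scope ring_scope.

Theorem theorem5p2 (R : realFieldType) (n k : nat) (nu : seq nat) :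
  (k < n)%N -> balanced nu k ->
  (let lam := padd (delta n) nu in
   tCDE (@shift_le lam) R /\
   expect (@shift_le lam) (uni (@shift_le lam) R) (fun I => (ddeg (@shift_le lam) I)%:R)
     = (n + 1 + k)%:R / 4%:R) /\
  (let lam := padd (padd (delta n) nu) (rect (n - 1 - k) n) in
   tCDE (@shift_le lam) R /\
   expect (@shift_le lam) (uni (@shift_le lam) R) (fun I => (ddeg (@shift_le lam) I)%:R)
     = n%:R / 2%:R).
Proof.
move=> kn hb.
have f1 := F1 hb; have f2 := F2 hb; have f3 := F3 hb; have f4 := F4 hb.
split.
- move=> lam.
  have lpE : forall i, (0 < i)%N -> part lam i = (n - i.-1 + nth 0 nu i.-1)%N.
    by move=> i _; rewrite /part /lam nth_padd nth_delta.
  have lp1 : part lam 1 = (n + k)%N by rewrite lpE //= f4 subn0.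
  have -> : (n + 1 + k = part lam 1 + 1)%N by rewrite lp1; lia.
  apply: shape_tCDE.
  + move=> i i0; rewrite !lpE //= ?(lpE i) //.
    have := f1 i.-1; have := f2 i; have := f2 i.-1; rewrite (_ : i.-1.+1 = i); last by lia.
    lia.
  + move=> i i0; rewrite !lpE //=.
    have := f1 i.-1; have := f2 i; have := f2 i.-1; have := f3 i.-1.
    rewrite (_ : i.-1.+1 = i); last by lia.
    lia.
  + move=> i i0; rewrite !lpE //=.
    have := f2 i; have := f2 i.-1; lia.
  + lia.
- move=> lam.
  have lpE : forall i, (0 < i)%N -> part lam i =
      (n - i.-1 + nth 0 nu i.-1 + (if i.-1 < n then n - 1 - k else 0))%N.
    by move=> i _; rewrite /part /lam !nth_padd nth_delta nth_rect.
  have lp1 : part lam 1 = (2 * n - 1)%N.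
    by rewrite lpE //= f4 subn0; case: ifP; lia.
  have [] := @shape_tCDE lam _ _ _ _ R.
  + move=> i i0; rewrite !lpE //=.
    have := f1 i.-1; have := f2 i; have := f2 i.-1; rewrite (_ : i.-1.+1 = i); last by lia.
    by repeat case: ifP; lia.
  + move=> i i0; rewrite !lpE //=.
    have := f1 i.-1; have := f2 i; have := f2 i.-1; have := f3 i.-1.
    rewrite (_ : i.-1.+1 = i); last by lia.
    by repeat case: ifP; lia.
  + move=> i i0; rewrite !lpE //=.
    have := f2 i; have := f2 i.-1.
    by repeat case: ifP; lia.
  + lia.
  move=> h1 h2; split => //; rewrite h2.
  have -> : (part lam 1 + 1 = 2 * n)%N by rewrite lp1; lia.
  rewrite natrM.
  have e2 : (2%:R : R) != 0 by rewrite pnatr_eq0.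
  have e4 : (4%:R : R) = 2%:R * 2%:R by rewrite -natrM.
  rewrite e4 invfM mulrA (mulrC 2%:R) -(mulrA (n%:R)) divff // mulr1.
  done.
Qed.
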